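(* Let $C$ be an open cone containing no lines, with basepoint $b\in C$. The set of horofunctions of the Hilbert geometry on $C$ is $$\{\,r_{C,x}+f \;:\; x\in\partial C\setminus\{0\},\ f\in A_C(x)\,\}.$$
   Context: $V$ is a finite-dimensional real vector space. An open cone is a nonempty open convex set $T\subset V$ with $\lambda T\subseteq T$ for all $\lambda>0$ and $0\notin T$; $\partial T$ is its boundary in $V$. Write $x\le_T y$ iff $y-x\in\overline T$, $[0]_T:=\overline T\cap(-\overline T)$ (so $[0]_C=\{0\}$ when $C$ has no lines). $M_T(y/x):=\inf\{\lambda>0:y\le_T\lambda x\}$ ($y\in V,x\in T$), $F_T(y,x):=\log M_T(y/x)$, $RF_T(x,y):=F_T(y,x)$, $H_C(x,y):=F_C(x,y)+F_C(y,x)$. For $p\in\partial C\setminus\{0\}$, $r_{C,p}(x):=RF_C(x,p)-RF_C(b,p)$. For $d\in\{F_C,H_C\}$, a sequence $(x_n)$ in $C$ converges in the $d$-sense to $g$ if $d(\cdot,x_n)-d(b,x_n)\to g$ pointwise on $C$; a horofunction of $d$ is such a limit not of the form $d(\cdot,p)-d(b,p)$, $p\in C$. For $x\in\partial C\setminus\{0\}$, $A_C(x)$ is the set of Funk-geometry horofunctions ($d=F_C$) that are Funk-sense limits of sequences in $C$ converging to $x$ in the usual topology of $V$. *)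

(* Defs.v *)
(* V = 'rV[R]_n (any finite-dimensional real vector space is isomorphic to one). *)
From HB Require Import structures.
From mathcomp Require Import all_boot all_order all_algebra.
From mathcomp Require Import all_classical all_reals all_analysis.
Set Implicit Arguments. Unset Strict Implicit. Unset Printing Implicit Defensive.
Import Order.TTheory GRing.Theory Num.Theory.
Import numFieldNormedType.Exports.
Local Open Scope classical_set_scope.
Local Open Scope ring_scope.

Section Defs.
Variables (R : realType) (n : nat).
Notation V := 'rV[R]_n.

Definition open_cone (T : set V) : Prop :=
  [/\ T !=set0, open T,
      (forall x y (t : R), T x -> T y -> 0 <= t -> t <= 1 -> T (t *: x + (1 - t) *: y)),
      (forall x (l : R), T x -> 0 < l -> T (l *: x)) &
      ~ T 0].

Definition no_lines (T : set V) : Prop :=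
  forall x d : V, d != 0 -> ~ (forall t : R, T (x + t *: d)).

Definition bdry (T : set V) : set V := closure T `\` interior T.

Definition cone_le (T : set V) (x y : V) : Prop := closure T (y - x).

Definition M_T (T : set V) (y x : V) : R :=
  inf [set l : R | 0 < l /\ cone_le T y (l *: x)].

Definition Funk (T : set V) (y x : V) : R := ln (M_T T y x).
Definition RFunk (T : set V) (x y : V) : R := Funk T y x.
Definition Hilb (T : set V) (x y : V) : R := Funk T x y + Funk T y x.

Definition r_fun (C : set V) (b p : V) (x : V) : R := RFunk C x p - RFunk C b p.

Definition d_conv (C : set V) (d : V -> V -> R) (b : V) (u : nat -> V) (g : V -> R) : Prop :=
  (forall k, C (u k)) /\
  (forall y, C y -> (fun k => d y (u k) - d b (u k)) @ \oo --> g y).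

Definition horofunction (C : set V) (d : V -> V -> R) (b : V) (g : V -> R) : Prop :=
  (exists u, d_conv C d b u g) /\
  ~ (exists p, C p /\ forall y, C y -> g y = d y p - d b p).

Definition A_C (C : set V) (b x : V) (f : V -> R) : Prop :=
  horofunction C (Funk C) b f /\
  exists u, d_conv C (Funk C) b u f /\ u @ \oo --> x.

End Defs.

(* Main.v *)
Require Import Defs.
From HB Require Import structures.
From mathcomp Require Import all_boot all_order all_algebra.
From mathcomp Require Import all_classical all_reals all_analysis.
From mathcomp Require Import ring lra.
Import Order.TTheory GRing.Theory Num.Theory.
Import numFieldNormedType.Exports.
Local Open Scope classical_set_scope.
Local Open Scope ring_scope.
Set Implicit Arguments. Unset Strict Implicit. Unset Printing Implicit Defensive.
Lemma half_split (R : realType) (a c l : R) : l = (a + (l - (a + c)) / 2) + (c + (l - (a + c)) / 2).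
Proof. lra. Qed.

Lemma mul_split (R : realType) (M1 M2 l : R) : 0 <= M1 -> 0 <= M2 -> M1 * M2 < l ->
  exists2 l1, M1 < l1 & M2 < l / l1.
Proof.
move=> h1 h2 hl.
have p : 0 < M2 + 1 by rewrite ltr_wpDl.
set dl := (l - M1 * M2) / (M2 + 1).
have dl0 : 0 < dl by rewrite divr_gt0 ?subr_gt0.
have hdl : dl * M2 + dl = l - M1 * M2.
  have : dl * (M2 + 1) = l - M1 * M2 by rewrite /dl divfK // gt_eqF.
  by rewrite mulrDr mulr1.
exists (M1 + dl); first by rewrite ltrDl.
rewrite ltr_pdivlMr ?ltr_wpDl // mulrDr [M2 * M1]mulrC [M2 * dl]mulrC.
clearbody dl; lra.
Qed.

Lemma cvg_ln (R : realType) (v : nat -> R) (a : R) : 0 < a ->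
  v n @[n --> \oo] --> a -> ln (v n) @[n --> \oo] --> ln a.
Proof. by move=> a0 hv; exact: (cvg_comp v (@ln R) hv (continuous_ln a0)). Qed.

Lemma cvg_exp (R : realType) (v : nat -> R) (a : R) :
  v n @[n --> \oo] --> a -> expR (v n) @[n --> \oo] --> expR a.
Proof. by move=> hv; exact: (cvg_comp v expR hv (@continuous_expR R a)). Qed.

Lemma ln_mulr_le (R : realType) (x y : R) : 0 < x -> 0 < y -> ln (x * y) = ln x + ln y.
Proof. by move=> x0 y0; rewrite lnM ?posrE. Qed.

Lemma ln_le (R : realType) (x y : R) : 0 < x -> x <= y -> ln x <= ln y.
Proof. by move=> x0 xy; rewrite ler_ln ?posrE // (lt_le_trans x0 xy). Qed.

Lemma cvg_ln_mul (R : realType) (a : R) (v eps : nat -> R) : 0 < a ->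
  eps n @[n --> \oo] --> 0 ->
  (\forall k \near \oo, [/\ 0 <= eps k, 0 < v k, v k <= a * (1 + eps k) & a <= v k * (1 + eps k)]) ->
  ln (v n) @[n --> \oo] --> ln a.
Proof.
move=> a0 he hv.
have hl : ln (1 + eps n) @[n --> \oo] --> 0.
  rewrite -(ln1 R); apply: cvg_ln => //.
  by rewrite -[X in _ --> X]addr0; apply: cvgD => //; exact: cvg_cst.
apply: (@squeeze_cvgr _ _ _ _ (fun k => ln a - ln (1 + eps k)) (fun k => ln a + ln (1 + eps k))).
- near=> k; have [e0 v0 h1 h2] : [/\ 0 <= eps k, 0 < v k, v k <= a * (1 + eps k) & a <= v k * (1 + eps k)].
    by near: k.
  have pe : 0 < 1 + eps k by rewrite ltr_wpDr.
  apply/andP; split.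
    rewrite lerBlDr -ln_mulr_le //; exact: ln_le.
  by rewrite -ln_mulr_le //; exact: ln_le.
- by rewrite -[X in _ --> X]subr0; apply: cvgB => //; exact: cvg_cst.
- by rewrite -[X in _ --> X]addr0; apply: cvgD => //; exact: cvg_cst.
Unshelve. all: end_near.
Qed.

Lemma abs_le2 (R : realType) (a v d e : R) : v <= a + d -> a <= v + d -> d <= e -> `|a - v| <= e.
Proof. move=> h1 h2 h3; rewrite ler_norml; apply/andP; split; lra. Qed.

Lemma half_div (R : realType) (t r : R) : 0 < r -> t / (r / 2) = 2 * t / r.
Proof. by move=> r0; field; rewrite gt_eqF. Qed.

Lemma scale_le (R : realType) (t r e : R) : 0 < r -> 0 <= t -> t <= e * r / 2 ->
  `|0 - 2 * t / r| <= e.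
Proof.
move=> r0 t0 h; rewrite sub0r normrN ger0_norm; last first.
  by apply: divr_ge0; [apply: mulr_ge0|apply: ltW].
rewrite ler_pdivrMr //; move: h; rewrite ler_pdivlMr //; lra.
Qed.

Lemma ratio_real (R : realType) (A X m d r : R) : 0 < m -> 0 < d -> 0 < r ->
  X <= 1 + d / r * m -> r / d <= m -> (A + X) / m <= A / m + 2 * d / r.
Proof.
move=> m0 d0 r0 hX hm.
rewrite mulrDl lerD2l ler_pdivrMr //.
have hq : 1 <= d / r * m.
  rewrite ler_pdivrMr // in hm.
  by rewrite mulrAC ler_pdivlMr // mul1r mulrC.
have -> : 2 * d / r * m = 2 * (d / r * m) by rewrite !mulrA.
move: hX hq; set q := d / r * m; lra.
Qed.

Lemma expR_lnB (R : realType) (A B : R) : 0 < A -> 0 < B -> expR (ln A - ln B) = A / B.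
Proof. by move=> A0 B0; rewrite expRD expRN !lnK ?posrE. Qed.

Lemma final_real (R : realType) (G Fyq Fqy Hbq Fxy Fxb fyt fq lt : R) :
  G = Fyq + Fqy - Hbq -> G = Fxy - Fxb + fyt -> Fxy <= - lt -> fyt <= Fyq + fq ->
  0 <= Fqy -> lt <= Hbq - Fxb + fq.
Proof. move=> *; lra. Qed.

Lemma cvg_uniq (R : realType) (v : nat -> R) (a c : R) :
  v k @[k --> \oo] --> a -> v k @[k --> \oo] --> c -> a = c.
Proof.
move=> h1 h2; apply/le_anti/andP; split.
  by apply: (ler_cvg_to h1 h2); near=> k; exact: lexx.
by apply: (ler_cvg_to h2 h1); near=> k; exact: lexx.
Unshelve. all: end_near.
Qed.

Lemma rearr1 (R : realType) (a b c d : R) : a - c = (a + b - (c + d)) - (b - d).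
Proof. lra. Qed.

Lemma rearr2 (R : realType) (a b c d : R) : a + b - (c + d) = (a - c) + (b - d).
Proof. lra. Qed.

Lemma tri_real (R : realType) (a b c d : R) : a <= c + d -> a - b <= c + (d - b).
Proof. move=> h; lra. Qed.
Section Cone.
Variables (R : realType) (n : nat) (C : set 'rV[R]_n) (b : 'rV[R]_n).
Hypothesis oC : open_cone C.
Hypothesis nlC : no_lines C.
Hypothesis Cb : C b.
Local Notation V := 'rV[R]_n.
Implicit Types (x y c v w d e : V) (l r a la : R).

Lemma Cscale (x : V) (l : R) : C x -> 0 < l -> C (l *: x).
Proof. by case: oC => _ _ _ h _; apply: h. Qed.

Lemma C0 : ~ C 0.
Proof. by case: oC. Qed.

Lemma Cadd (x y : V) : C x -> C y -> C (x + y).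
Proof.
case: oC => _ _ cv _ _ Cx Cy.
have h := cv x y 2^-1 Cx Cy.
have -> : x + y = 2 *: (2^-1 *: x + (1 - 2^-1) *: y).
  have -> : (1 - 2^-1 : R) = 2^-1 by field.
  by rewrite scalerDr !scalerA mulfV // !scale1r.
apply: Cscale => //; apply: h; first by rewrite invr_ge0.
by rewrite invf_le1 // ler1n.
Qed.

Lemma Cball (x : V) : C x -> exists2 r : R, 0 < r & forall y, `|x - y| < r -> C y.
Proof.
case: oC => _ oc _ _ _ Cx.
have : nbhs x C by rewrite openE in oc; exact: oc.
move=> /nbhs_ballP [r r0 hr]; exists r => // y hy; apply: hr.
by rewrite -ball_normE /ball_ /=.
Qed.

Definition Kc (v : V) := forall e : R, 0 < e -> C (v + e *: b).

Lemma CK x : C x -> Kc x.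
Proof. by move=> Cx e e0; apply: Cadd => //; apply: Cscale. Qed.

Lemma K0 : Kc 0.
Proof. by move=> e e0; rewrite add0r; apply: Cscale. Qed.

Lemma Kadd x y : Kc x -> Kc y -> Kc (x + y).
Proof.
move=> Kx Ky e e0.
have -> : x + y + e *: b = (x + (e/2) *: b) + (y + (e/2) *: b).
  by rewrite addrACA -scalerDl; congr (_ + _ *: _); field.
by apply: Cadd; [apply: Kx|apply: Ky]; rewrite divr_gt0.
Qed.

Lemma Kscale x (l : R) : Kc x -> 0 <= l -> Kc (l *: x).
Proof.
move=> Kx; rewrite le_eqVlt => /orP [/eqP <-|l0]; first by rewrite scale0r; exact: K0.
move=> e e0.
have -> : l *: x + e *: b = l *: (x + (e / l) *: b).
  by rewrite scalerDr scalerA mulrCA mulfV ?gt_eqF // mulr1.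
by apply: Cscale => //; apply: Kx; rewrite divr_gt0.
Qed.

Lemma small_pos (a : R) : 0 < a -> exists2 e : R, 0 < e & `|e *: b| < a.
Proof.
move=> a0; exists (a / (`|b| + 1)).
  by rewrite divr_gt0 // ltr_wpDl.
rewrite normrZ ger0_norm; last by rewrite divr_ge0 // ?ltW // addr_ge0.
rewrite mulrAC ltr_pdivrMr ?ltr_wpDl //.
by rewrite ltr_pM2l // ltrDl.
Qed.

Lemma CKadd c v : C c -> Kc v -> C (c + v).
Proof.
move=> Cc Kv; have [r r0 hr] := Cball Cc.
have [e e0 he] := small_pos r0.
have -> : c + v = (c - e *: b) + (v + e *: b) by rewrite addrACA addNr addr0.
apply: Cadd; last exact: Kv.
by apply: hr; rewrite opprB addrC subrK.
Qed.

Lemma clK v : closure C v <-> Kc v.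
Proof.
split.
- move=> clv e e0.
  have Ceb : C (e *: b) by apply: Cscale.
  have [r r0 hr] := Cball Ceb.
  have [z [Cz hz]] := clv _ (nbhsx_ballx v r r0).
  move: hz; rewrite -ball_normE /ball_ /= => hz.
  have -> : v + e *: b = z + (e *: b + (v - z)) by rewrite addrCA subrKC addrC.
  apply: Cadd => //; apply: hr.
  by rewrite opprD addrA subrr sub0r normrN.
- move=> Kv B /nbhs_ballP [r r0 hr].
  have [e e0 he] := small_pos r0.
  exists (v + e *: b); split; first exact: Kv.
  by apply: hr; rewrite -ball_normE /ball_ /= opprD addrA subrr sub0r normrN.
Qed.

Lemma Knl v : Kc v -> Kc (- v) -> v = 0.
Proof.
move=> Kv Kv'; apply/eqP; apply/negPn/negP => v0.
have := nlC v0 (x:=b); apply => t.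
have [t0|t0] := leP 0 t.
  by apply: CKadd => //; apply: Kscale.
have -> : t *: v = (- t) *: (- v) by rewrite scaleNr scalerN opprK.
by apply: CKadd => //; apply: Kscale => //; rewrite oppr_ge0 ltW.
Qed.

Definition S (w d : V) := [set l : R | 0 < l /\ Kc (l *: d - w)].

Lemma ME w d : M_T C w d = inf (S w d).
Proof.
rewrite /M_T; congr inf; apply/funext => l; apply/propext; rewrite /cone_le.
by split => -[l0 h]; split => //; apply/clK.
Qed.

Local Opaque M_T.

Lemma Cdiv d r w (l : R) : 0 < r -> (forall y, `|d - y| < r -> C y) ->
  `|w| / r < l -> C (l *: d - w).
Proof.
move=> r0 hr hl.
have l0 : 0 < l by apply: le_lt_trans hl; rewrite divr_ge0 // ltW.
have -> : l *: d - w = l *: (d - l^-1 *: w).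
  by rewrite scalerBr scalerA mulfV ?gt_eqF // scale1r.
apply: Cscale => //; apply: hr.
rewrite opprB addrC subrK normrZ ger0_norm ?invr_ge0 ?ltW //.
rewrite mulrC ltr_pdivrMr //; rewrite ltr_pdivrMr // in hl.
by rewrite mulrC.
Qed.

Lemma Sne w d : C d -> exists l, S w d l.
Proof.
move=> Cd; have [r r0 hr] := Cball Cd.
exists (`|w| / r + 1); split.
  by rewrite ltr_wpDl // divr_ge0 // ltW.
by apply: CK; apply: (Cdiv r0 hr); rewrite ltrDl.
Qed.

Lemma S_lb w d : lbound (S w d) 0.
Proof. by move=> l [l0 _]; apply: ltW. Qed.

Lemma Mnn w d : C d -> 0 <= M_T C w d.
Proof. by move=> Cd; rewrite ME; apply: lb_le_inf; [exact: Sne|exact: S_lb]. Qed.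

Lemma Mle_S w d l : S w d l -> M_T C w d <= l.
Proof. by move=> Sl; rewrite ME; apply: ge_inf => //; exists 0; exact: S_lb. Qed.

Lemma Mle w d a : 0 <= a -> (forall l, a < l -> Kc (l *: d - w)) -> M_T C w d <= a.
Proof.
move=> a0 h; apply/ler_addgt0Pr => e e0; apply: Mle_S; split.
  by rewrite ltr_wpDl.
by apply: h; rewrite ltrDl.
Qed.

Lemma Mgt w d l : C d -> M_T C w d < l -> Kc (l *: d - w).
Proof.
move=> Cd hl.
have [s Ss hs] : exists2 s, S w d s & s < M_T C w d + (l - M_T C w d).
  rewrite ME; apply: inf_adherent; first by rewrite subr_gt0 -ME.
  by split; [exact: Sne|exists 0; exact: S_lb].
move: hs; rewrite subrKC => hs.
have -> : l *: d - w = (s *: d - w) + (l - s) *: d.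
  by rewrite scalerBl [RHS]addrC addrA subrK.
apply: Kadd; first by case: Ss.
by apply: Kscale; [exact: CK| rewrite subr_ge0 ltW].
Qed.

Lemma Mge w d a : C d -> (forall l, 0 < l -> Kc (l *: d - w) -> a <= l) -> a <= M_T C w d.
Proof.
move=> Cd h; rewrite ME; apply: lb_le_inf; first exact: Sne.
by move=> l [l0 hl]; apply: h.
Qed.

Lemma Mpos w d : C d -> Kc w -> w != 0 -> 0 < M_T C w d.
Proof.
move=> Cd Kw w0; rewrite lt_neqAle Mnn // andbT; apply/negP => /eqP M0.
apply/negP: w0; apply/negPn/eqP; apply: Knl => // e e0.
have [r r0 hr] := Cball Cb.
have [dd hd] : exists dd : R, 0 < dd /\ `|dd *: d| < r.
  exists (r / (`|d| + 1)); split; first by rewrite divr_gt0 // ltr_wpDl.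
  rewrite normrZ ger0_norm; last by rewrite divr_ge0 // ?ltW // addr_ge0.
  by rewrite mulrAC ltr_pdivrMr ?ltr_wpDl // ltr_pM2l // ltrDl.
case: hd => dd0 hdd.
have Cl : C (e *: (b - dd *: d)).
  apply: Cscale => //; apply: hr.
  by rewrite opprB addrC subrK.
have Kl : Kc ((e * dd) *: d - w) by apply: Mgt => //; rewrite -M0 mulr_gt0.
have -> : - w + e *: b = e *: (b - dd *: d) + ((e * dd) *: d - w).
  by rewrite scalerBr scalerA addrA subrK addrC.
exact: CKadd.
Qed.

Lemma Msub (w1 w2 : V) d : C d -> M_T C (w1 + w2) d <= M_T C w1 d + M_T C w2 d.
Proof.
move=> Cd; apply: Mle; first by rewrite addr_ge0 // Mnn.
move=> l hl.
have h1 : Kc ((M_T C w1 d + (l - (M_T C w1 d + M_T C w2 d)) / 2) *: d - w1).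
  by apply: Mgt => //; rewrite ltrDl divr_gt0 // subr_gt0.
have h2 : Kc ((M_T C w2 d + (l - (M_T C w1 d + M_T C w2 d)) / 2) *: d - w2).
  by apply: Mgt => //; rewrite ltrDl divr_gt0 // subr_gt0.
rewrite (half_split (M_T C w1 d) (M_T C w2 d) l).
by rewrite scalerDl [- (w1 + w2)]opprD addrACA; apply: Kadd.
Qed.

Lemma Mmul w d e : C d -> C e -> M_T C w d <= M_T C w e * M_T C e d.
Proof.
move=> Cd Ce.
have M10 : 0 <= M_T C w e by apply: Mnn.
have M20 : 0 <= M_T C e d by apply: Mnn.
apply: (@Mle w d (M_T C w e * M_T C e d)); first exact: (mulr_ge0 M10 M20).
move=> l hl; have [l1 hl1 hl2] := mul_split M10 M20 hl.
have l10 : 0 < l1 := le_lt_trans M10 hl1.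
have h1 : Kc (l1 *: e - w) by apply: Mgt.
have h2 : Kc ((l / l1) *: d - e) by apply: Mgt.
have -> : l *: d - w = l1 *: ((l / l1) *: d - e) + (l1 *: e - w).
  rewrite scalerBr scalerA mulrCA mulfV ?gt_eqF // mulr1.
  by rewrite addrA subrK.
by apply: Kadd => //; apply: Kscale => //; rewrite ltW.
Qed.

Lemma Mball w d r : 0 < r -> (forall y, `|d - y| < r -> C y) -> M_T C w d <= `|w| / r.
Proof.
move=> r0 hr; apply: Mle; first by rewrite divr_ge0 // ltW.
by move=> l hl; apply: CK; apply: (Cdiv r0 hr).
Qed.

Lemma Mself d : C d -> M_T C d d <= 1.
Proof.
move=> Cd; apply: Mle => // l hl.
have -> : l *: d - d = (l - 1) *: d by rewrite scalerBl scale1r.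
by apply: Kscale; [exact: CK|rewrite subr_ge0 ltW].
Qed.

Lemma MscaleD w d (la : R) : C d -> 0 < la -> M_T C w (la *: d) = M_T C w d / la.
Proof.
move=> Cd la0; have Cd' : C (la *: d) by apply: Cscale.
apply/le_anti/andP; split.
  apply: Mle; first by rewrite divr_ge0 ?Mnn // ltW.
  move=> l hl; rewrite scalerA; apply: Mgt => //.
  by rewrite -ltr_pdivrMr.
have : M_T C w d <= la * M_T C w (la *: d).
  apply: Mle; first by rewrite mulr_ge0 ?Mnn // ltW.
  move=> l hl.
  have -> : l *: d = (l / la) *: (la *: d).
    by rewrite scalerA mulfVK ?gt_eqF.
  by apply: Mgt => //; rewrite ltr_pdivlMr // mulrC.
by rewrite ler_pdivrMr // mulrC.
Qed.

Lemma MscaleN w d (la : R) : C d -> 0 < la -> M_T C (la *: w) d = la * M_T C w d.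
Proof.
move=> Cd la0.
apply/le_anti/andP; split.
  apply: Mle; first by rewrite mulr_ge0 ?Mnn // ltW.
  move=> l hl.
  have -> : l *: d - la *: w = la *: ((l / la) *: d - w).
    by rewrite scalerBr scalerA mulrCA mulfV ?gt_eqF // mulr1.
  by apply: Kscale; [apply: Mgt => //; rewrite ltr_pdivlMr // mulrC|exact: ltW].
have : M_T C w d <= M_T C (la *: w) d / la.
  apply: Mle; first by rewrite divr_ge0 ?Mnn // ltW.
  move=> l hl.
  have -> : l *: d - w = la^-1 *: ((la * l) *: d - la *: w).
    by rewrite scalerBr !scalerA mulrA mulVf ?gt_eqF // !mul1r scale1r.
  apply: Kscale; last by rewrite invr_ge0 (ltW la0).
  by apply: Mgt => //; move: hl; rewrite ltr_pdivrMr // mulrC.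
by rewrite ler_pdivlMr // mulrC.
Qed.

Lemma MposC y u : C y -> C u -> 0 < M_T C y u.
Proof.
move=> Cy Cu; apply: Mpos => //; first exact: CK.
by apply/eqP => y0; apply: C0; rewrite -y0.
Qed.

Lemma Fdef y u : Funk C y u = ln (M_T C y u).
Proof. by []. Qed.

Lemma Ftri y z u : C y -> C z -> C u -> Funk C y u <= Funk C y z + Funk C z u.
Proof.
move=> Cy Cz Cu; rewrite !Fdef -ln_mulr_le ?MposC //.
by apply: ln_le; [exact: MposC|exact: Mmul].
Qed.

Lemma FscaleD y u (la : R) : C u -> M_T C y u > 0 -> 0 < la ->
  Funk C y (la *: u) = Funk C y u - ln la.
Proof.
move=> Cu hM la0; rewrite !Fdef MscaleD // ln_mulr_le ?invr_gt0 //.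
by rewrite lnV ?posrE.
Qed.

Lemma FscaleN u y (la : R) : C y -> M_T C u y > 0 -> 0 < la ->
  Funk C (la *: u) y = ln la + Funk C u y.
Proof. by move=> Cy hM la0; rewrite !Fdef MscaleN // ln_mulr_le. Qed.

Lemma HscaleD y u (la : R) : C y -> C u -> 0 < la -> Hilb C y (la *: u) = Hilb C y u.
Proof.
move=> Cy Cu la0; rewrite /Hilb (FscaleD Cu (MposC Cy Cu) la0).
rewrite (FscaleN Cy (MposC Cu Cy) la0).
by rewrite addrA subrK.
Qed.

Lemma FdiffD y u (la : R) : C y -> C u -> 0 < la ->
  Funk C y (la *: u) - Funk C b (la *: u) = Funk C y u - Funk C b u.
Proof.
move=> Cy Cu la0; rewrite (FscaleD Cu (MposC Cy Cu) la0) (FscaleD Cu (MposC Cb Cu) la0).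
by rewrite opprB addrA subrK.
Qed.

Lemma cvg_num (x y : V) (w : nat -> V) : Kc x -> x != 0 -> C y ->
  w k @[k --> \oo] --> x -> Funk C (w k) y @[k --> \oo] --> Funk C x y.
Proof.
move=> Kx x0 Cy hw; rewrite Fdef.
apply: (@cvg_ln _ (fun k => M_T C (w k) y)); first exact: Mpos.
have [r r0 hr] := Cball Cy.
apply/cvgrPdist_le => e e0.
move/cvgrPdist_le: hw => /(_ (e * r)) []; first by rewrite mulr_gt0.
move=> N _ hN; exists N => // k /hN hk.
have h1 : M_T C (w k) y <= M_T C x y + `|x - w k| / r.
  rewrite [X in M_T C X _ <= _](_ : w k = x + (w k - x)); last by rewrite addrC subrK.
  apply: le_trans (Msub _ _ Cy) _; rewrite lerD2l distrC.
  exact: Mball.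
have h2 : M_T C x y <= M_T C (w k) y + `|x - w k| / r.
  rewrite [X in M_T C X _ <= _](_ : x = w k + (x - w k)); last by rewrite addrC subrK.
  apply: le_trans (Msub _ _ Cy) _; rewrite lerD2l.
  exact: Mball.
have hk' : `|x - w k| / r <= e by rewrite ler_pdivrMr.
exact: (abs_le2 h1 h2 hk').
Qed.

Lemma cvg_den (x y : V) (w : nat -> V) : C x -> C y -> (forall k, C (w k)) ->
  w k @[k --> \oo] --> x -> Funk C y (w k) @[k --> \oo] --> Funk C y x.
Proof.
move=> Cx Cy Cw hw; rewrite Fdef.
have [r r0 hr] := Cball Cx.
have r20 : 0 < r / 2 by rewrite divr_gt0.
apply: (@cvg_ln_mul _ (M_T C y x) (fun k => M_T C y (w k)) (fun k => 2 * `|x - w k| / r)).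
- exact: MposC.
- apply/cvgrPdist_le => e e0.
  move/cvgrPdist_le: hw => /(_ (e * r / 2)) []; first by rewrite divr_gt0 ?mulr_gt0.
  move=> N _ hN; exists N => // k /hN hk.
  exact: scale_le.
- move/cvgrPdist_lt: hw => /(_ (r / 2) r20) [N _ hN]; exists N => // k /hN hk.
  have hb : forall z, `|w k - z| < r / 2 -> C z.
    move=> z hz; apply: hr.
    apply: le_lt_trans (ler_distD (w k) x z) _.
    by rewrite [ltRHS](splitr r); apply: ltrD.
  have e0 : 0 <= 2 * `|x - w k| / r by rewrite divr_ge0 ?mulr_ge0 // ltW.
  have hxu : M_T C x (w k) <= 1 + 2 * `|x - w k| / r.
    rewrite [X in M_T C X _ <= _](_ : x = w k + (x - w k)); last by rewrite addrC subrK.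
    apply: le_trans (Msub _ _ (Cw k)) _; apply: lerD; first exact: Mself.
    rewrite -half_div //; exact: Mball.
  have hux : M_T C (w k) x <= 1 + 2 * `|x - w k| / r.
    rewrite [X in M_T C X _ <= _](_ : w k = x + (w k - x)); last by rewrite addrC subrK.
    apply: le_trans (Msub _ _ Cx) _; apply: lerD; first exact: Mself.
    apply: le_trans (Mball _ r0 hr) _; rewrite distrC ler_pM2r ?invr_gt0 //.
    by rewrite ler_peMl // ler1n.
  split => //; first exact: MposC.
    apply: le_trans (Mmul _ (Cw k) Cx) _.
    exact: (ler_wpM2l (Mnn y Cx) hxu).
  apply: le_trans (Mmul _ Cx (Cw k)) _.
  exact: (ler_wpM2l (Mnn y (Cw k)) hux).
Qed.

Lemma ratio_bound (x u p : V) (r : R) : ~ C x -> Kc x -> C u -> C p -> 0 < r ->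
  (forall z, `|b - z| < r -> C z) ->
  M_T C (p + x) u / M_T C b u <= M_T C p u / M_T C b u + 2 * `|x - u| / r.
Proof.
move=> nCx Kx Cu Cp r0 hr.
have d0 : 0 < `|x - u|.
  rewrite normr_gt0 subr_eq0; apply/eqP => xu; apply: nCx; rewrite xu; exact: Cu.
have m0 : 0 < M_T C b u := MposC Cb Cu.
have hm : r / `|x - u| <= M_T C b u.
  apply: Mge => // l l0 Kl.
  rewrite ler_pdivrMr //; rewrite leNgt; apply/negP => hl.
  have Cc : C (b + l *: (x - u)).
    apply: hr; rewrite opprD addrA subrr sub0r normrN normrZ ger0_norm //.
    exact: ltW.
  have Clx : C (l *: x).
    have -> : l *: x = (b + l *: (x - u)) + (l *: u - b).
      by apply/rowP => i; rewrite !mxE; ring.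
    exact: CKadd.
  apply: nCx; have -> : x = l^-1 *: (l *: x) by rewrite scalerA mulVf ?gt_eqF // scale1r.
  by apply: Cscale => //; rewrite invr_gt0.
have hxu : M_T C x u <= 1 + `|x - u| / r * M_T C b u.
  rewrite [X in M_T C X _ <= _](_ : x = u + (x - u)); last by rewrite addrC subrK.
  apply: le_trans (Msub _ _ Cu) _; apply: lerD; first exact: Mself.
  apply: le_trans (Mmul _ Cu Cb) _.
  exact: (ler_wpM2r (Mnn b Cu) (Mball _ r0 hr)).
apply: le_trans (ratio_real (M_T C p u) m0 d0 r0 hxu hm).
apply: ler_wpM2r; first by rewrite invr_ge0 ltW.
exact: Msub.
Qed.

Lemma lowb1 (x p : V) : Kc x -> x != 0 -> C p -> 1 + M_T C x p <= M_T C (p + x) p.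
Proof.
move=> Kx x0 Cp; apply: Mge => // l l0 Kl.
have Kl' : Kc ((l - 1) *: p - x).
  by have -> : (l - 1) *: p - x = l *: p - (p + x) by apply/rowP => i; rewrite !mxE; ring.
have l1 : 1 < l.
  rewrite ltNge; apply/negP => hl.
  have Kx' : Kc (- x).
    have -> : - x = ((l - 1) *: p - x) + (1 - l) *: p by apply/rowP => i; rewrite !mxE; ring.
    by apply: Kadd => //; apply: Kscale; [exact: CK|rewrite subr_ge0].
  by move/eqP: x0; apply; apply: Knl.
rewrite addrC -lerBrDr; apply: Mle_S; split; first by rewrite subr_gt0.
exact: Kl'.
Qed.

Lemma lowb2 (x q : V) (t : R) : ~ C x -> Kc x -> C q -> 0 < t -> 1 <= M_T C q (q + t *: x).
Proof.
move=> nCx Kx Cq t0; apply: Mge.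
  by apply: CKadd => //; apply: Kscale => //; exact: ltW.
move=> l l0 Kl; rewrite leNgt; apply/negP => hl.
apply: nCx.
have -> : x = ((1 - l) / (l * t)) *: q + (x - ((1 - l) / (l * t)) *: q) by rewrite subrKC.
have lt0 : 0 < l * t by rewrite mulr_gt0.
apply: CKadd; first by apply: Cscale => //; rewrite divr_gt0 // subr_gt0.
have -> : x - ((1 - l) / (l * t)) *: q = (l * t)^-1 *: (l *: (q + t *: x) - q).
  by apply/rowP => i; rewrite !mxE; field; rewrite (gt_eqF t0) (gt_eqF l0).
by apply: Kscale => //; rewrite invr_ge0 ltW.
Qed.

Lemma upb (x q : V) (t : R) : Kc x -> C q -> 0 < t -> M_T C x (q + t *: x) <= t^-1.
Proof.
move=> Kx Cq t0; apply: Mle; first by rewrite invr_ge0 ltW.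
move=> l hl.
have l0 : 0 < l by apply: le_lt_trans hl; rewrite invr_ge0 ltW.
have -> : l *: (q + t *: x) - x = l *: q + (l * t - 1) *: x.
  by apply/rowP => i; rewrite !mxE; ring.
apply: Kadd; first by apply: Kscale; [exact: CK| exact: ltW].
apply: Kscale => //; rewrite subr_ge0.
by move: hl; rewrite -div1r ltr_pdivrMr // => /ltW.
Qed.

Lemma sphere_compact : compact [set v : V | `|v| = 1].
Proof.
apply: bounded_closed_compact.
  exists 1; split; first exact: num_real.
  by move=> M hM v /= ->; exact: ltW.
have := (continuous_closedP (fun v : V => `|v|)).1 (@norm_continuous _ _) _ (@closed_eq _ 1).
by [].
Qed.

Lemma extract (w : nat -> V) (x : V) : cluster (w k @[k --> \oo]) x ->
  exists phi : nat -> nat, (forall k, (k <= phi k)%N) /\ w (phi k) @[k --> \oo] --> x.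
Proof.
move=> cl.
have pick : forall Nk : nat * nat, exists j, (Nk.1 <= j)%N /\ `|x - w j| < (Nk.2.+1%:R)^-1.
  move=> [N k] /=.
  have FA : (w k @[k --> \oo]) [set v | exists2 j, (N <= j)%N & v = w j].
    by exists N => // j hj; exists j.
  have k0 : 0 < (k.+1%:R : R)^-1 by rewrite invr_gt0 ltr0n.
  have [v [[j hj ->] hb]] := cl _ _ FA (nbhsx_ballx x _ k0).
  by exists j; split => //; move: hb; rewrite -ball_normE /ball_ /=.
have [f hf] := choice pick.
pose phi := fix phi k := if k is k'.+1 then f ((phi k').+1, k'.+1) else f (0%N, 0%N).
have phiS : forall k, phi k.+1 = f ((phi k).+1, k.+1) by [].
have hphi : forall k, (k <= phi k)%N /\ `|x - w (phi k)| < (k.+1%:R)^-1.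
  case => [|k]; first by have [_ h] := hf (0%N, 0%N); split.
  rewrite phiS; have [h1 h2] := hf ((phi k).+1, k.+1); split => //.
  elim: k h1 {h2} => [|k ih] /=.
    by move=> h; apply: leq_trans h; rewrite ltnS.
  move=> h; apply: leq_trans h; rewrite ltnS.
  by have [h1' _] := hf ((phi k).+1, k.+1); apply: ih; rewrite -phiS.
exists phi; split; first by move=> k; case: (hphi k).
apply/cvgrPdist_lt => e e0; near=> k.
apply: lt_le_trans (hphi k).2 _.
rewrite invf_ple ?posrE ?ltr0n // ?(ltW e0) //.
apply: le_trans (_ : k%:R <= _); last by rewrite ler_nat.
near: k; exact: nbhs_infty_ger.
Unshelve. all: end_near.
Qed.

Lemma cvg_sub (T : pseudoMetricNormedZmodType R) (v : nat -> T) (l : T) (phi : nat -> nat) :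
  (forall k, (k <= phi k)%N) -> v k @[k --> \oo] --> l -> v (phi k) @[k --> \oo] --> l.
Proof.
move=> hphi hv; apply: (cvg_comp phi v _ hv).
move=> A [N _ hA]; exists N => // k hk; apply: hA.
exact: leq_trans hk (hphi k).
Qed.

Lemma cvg_dist0 (v : nat -> V) (x : V) (r : R) : 0 < r ->
  v k @[k --> \oo] --> x -> 2 * `|x - v k| / r @[k --> \oo] --> (0 : R).
Proof.
move=> r0 hv; apply/cvgrPdist_le => e e0.
move/cvgrPdist_le: hv => /(_ (e * r / 2)) []; first by rewrite divr_gt0 ?mulr_gt0.
move=> N _ hN; exists N => // k /hN hk.
exact: scale_le.
Qed.

Lemma exp_ratio_bound (x u p : V) (r : R) : ~ C x -> Kc x -> C u -> C p -> 0 < r ->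
  (forall z, `|b - z| < r -> C z) ->
  expR (Funk C (p + x) u - Funk C b u) <= expR (Funk C p u - Funk C b u) + 2 * `|x - u| / r.
Proof.
move=> nCx Kx Cu Cp r0 hr.
have Cy1 : C (p + x) := CKadd Cp Kx.
have e1 := expR_lnB (MposC Cy1 Cu) (MposC Cb Cu).
have e2 := expR_lnB (MposC Cp Cu) (MposC Cb Cu).
rewrite /Funk [X in X <= _]e1 [X in _ <= X + _]e2.
exact: (ratio_bound nCx Kx Cu Cp r0 hr).
Qed.

Lemma forward (g : V -> R) : horofunction C (Hilb C) b g ->
    exists x : V, exists f : V -> R,
      [/\ bdry C x, x != 0, A_C C b x f &
          forall y, C y -> g y = r_fun C b x y + f y].
Proof.
move=> [[u [Cu hu]] nondeg].
have u0 k : 0 < `|u k|.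
  by rewrite normr_gt0; apply/eqP => h; apply: C0; rewrite -h.
have iu k : 0 < `|u k|^-1 by rewrite invr_gt0.
pose w k := `|u k|^-1 *: u k.
have Cw k : C (w k) := Cscale (Cu k) (iu k).
have hw y : C y -> Hilb C y (w k) - Hilb C b (w k) @[k --> \oo] --> g y.
  move=> Cy; have -> : (fun k => Hilb C y (w k) - Hilb C b (w k)) =
                      (fun k => Hilb C y (u k) - Hilb C b (u k)).
    apply/funext => k; rewrite /w.
    by rewrite (HscaleD Cy (Cu k) (iu k)) (HscaleD Cb (Cu k) (iu k)).
  exact: hu.
have w1 k : `|w k| = 1.
  by rewrite /w normrZ (ger0_norm (ltW (iu k))) (mulVf (lt0r_neq0 (u0 k))).
have FA : (w k @[k --> \oo]) [set v : V | `|v| = 1] by exists 0%N => // k _; exact: w1.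
have [x [x1 clx]] := sphere_compact _ FA.
have [phi [hphi hwx]] := extract clx.
pose v k := w (phi k).
have Cv k : C (v k) by exact: Cw.
have hv y : C y -> Hilb C y (v k) - Hilb C b (v k) @[k --> \oo] --> g y.
  by move=> Cy; exact: (cvg_sub (v := fun k => Hilb C y (w k) - Hilb C b (w k)) hphi (hw y Cy)).
have x0 : x != 0 by apply/eqP => x0; move: x1; rewrite /= x0 normr0 => /eqP; rewrite eq_sym oner_eq0.
have clCx : closure C x.
  apply: (closed_cvg _ (@closed_closure _ C) _ _ hwx).
  by exists 0%N => // k _; apply: subset_closure; exact: Cv.
have Kx : Kc x by apply/clK.
have hvx : v k @[k --> \oo] --> x := hwx.
case: (pselect (C x)) => [Cx|nCx].
  exfalso; apply: nondeg; exists x; split => // y Cy.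
  apply: (cvg_uniq (hv y Cy)).
  rewrite /Hilb.
  apply: cvgB; apply: cvgD.
  - exact: (cvg_den Cx Cy Cv hvx).
  - exact: (cvg_num Kx x0 Cy hvx).
  - exact: (cvg_den Cx Cb Cv hvx).
  - exact: (cvg_num Kx x0 Cb hvx).
have hF y : C y -> Funk C y (v k) - Funk C b (v k) @[k --> \oo] --> g y - r_fun C b x y.
  move=> Cy.
  have -> : (fun k => Funk C y (v k) - Funk C b (v k)) =
     (fun k => (Hilb C y (v k) - Hilb C b (v k)) - (Funk C (v k) y - Funk C (v k) b)).
    by apply/funext => k; rewrite /Hilb; exact: rearr1.
  rewrite /r_fun /RFunk.
  apply: cvgB; first exact: hv.
  by apply: cvgB; [exact: (cvg_num Kx x0 Cy hvx)|exact: (cvg_num Kx x0 Cb hvx)].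
exists x, (fun y => g y - r_fun C b x y); split => //.
- by split => // /interior_subset.
- split; last by exists v; split => //; split.
  split; first by exists v; split.
  move=> [p [Cp hp]].
  have [r r0 hr] := Cball Cb.
  have Cy1 : C (p + x) := CKadd Cp Kx.
  have lim1 := cvg_exp (hF _ Cy1).
  have lim2 : expR (Funk C p (v k) - Funk C b (v k)) + 2 * `|x - v k| / r @[k --> \oo]
       --> expR (g p - r_fun C b x p) + 0.
    by apply: cvgD; [exact: (cvg_exp (hF _ Cp))|exact: (cvg_dist0 r0 hvx)].
  have bound : forall k, expR (Funk C (p + x) (v k) - Funk C b (v k)) <=
      expR (Funk C p (v k) - Funk C b (v k)) + 2 * `|x - v k| / r.
    by move=> k; apply: (exp_ratio_bound nCx Kx (Cv k) Cp r0 hr).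
  have hle : expR (g (p + x) - r_fun C b x (p + x)) <= expR (g p - r_fun C b x p) + 0.
    by apply: (ler_cvg_to lim1 lim2); near=> k; exact: bound.
  move: hle; rewrite addr0 ler_expR (hp _ Cy1) (hp _ Cp) lerD2r => hle.
  have Fpp : Funk C p p <= 0 := ln_le0 (Mself Cp).
  have Fy1 : 0 < Funk C (p + x) p.
    apply: ln_gt0; apply: lt_le_trans (lowb1 Kx x0 Cp).
    by rewrite ltrDl; exact: Mpos.
  by move: (lt_le_trans Fy1 (le_trans hle Fpp)); rewrite ltxx.
- by move=> y Cy; rewrite addrC subrK.
Unshelve. all: end_near.
Qed.

Lemma Ftri_lim (y q : V) (u : nat -> V) : C y -> C q -> (forall k, C (u k)) ->
  forall k, Funk C y (u k) - Funk C b (u k) <= Funk C y q + (Funk C q (u k) - Funk C b (u k)).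
Proof.
move=> Cy Cq Cu k; exact: (tri_real _ (Ftri Cy Cq (Cu k))).
Qed.

Lemma backward (g : V -> R) : (exists x : V, exists f : V -> R,
      [/\ bdry C x, x != 0, A_C C b x f &
          forall y, C y -> g y = r_fun C b x y + f y]) ->
  horofunction C (Hilb C) b g.
Proof.
move=> [x [f [[clx nintx] x0 [_ [u [[Cu hu] ux]]] hg]]].
have Kx : Kc x by apply/clK.
have nCx : ~ C x.
  move=> Cx; apply: nintx; case: oC => _ oc _ _ _; rewrite openE in oc; exact: oc.
split.
  exists u; split => // y Cy.
  have -> : (fun k => Hilb C y (u k) - Hilb C b (u k)) =
     (fun k => (Funk C y (u k) - Funk C b (u k)) + (Funk C (u k) y - Funk C (u k) b)).
    apply/funext => k; exact: (rearr2 (Funk C y (u k)) (Funk C (u k) y) (Funk C b (u k)) (Funk C (u k) b)).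
  have -> : g y = f y + r_fun C b x y by rewrite (hg _ Cy) addrC.
  apply: cvgD; first exact: hu.
  by apply: cvgB; [exact: (cvg_num Kx x0 Cy ux)|exact: (cvg_num Kx x0 Cb ux)].
move=> [q [Cq hq]].
pose K0 := Hilb C b q - Funk C x b + f q.
pose t := expR (K0 + 1).
have t0 : 0 < t := expR_gt0 _.
have Cyt : C (q + t *: x) by apply: CKadd => //; apply: Kscale => //; exact: ltW.
have hd : f (q + t *: x) <= Funk C (q + t *: x) q + f q.
  apply: (ler_cvg_to (hu _ Cyt)).
    by apply: cvgD; [exact: cvg_cst|exact: hu].
  by near=> k; exact: (Ftri_lim Cyt Cq Cu k).
have hc : Funk C x (q + t *: x) <= - ln t.
  rewrite -lnV ?posrE //; apply: ln_le; first exact: Mpos.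
  exact: upb.
have he : 0 <= Funk C q (q + t *: x) by apply: ln_ge0; exact: lowb2.
have := final_real (hq _ Cyt) (hg _ Cyt) hc hd he.
rewrite /t expRK -/K0 => h.
have hK : K0 < K0 + 1 by rewrite ltrDl ltr01.
by move: (lt_le_trans hK h); rewrite ltxx.
Unshelve. all: end_near.
Qed.

Lemma main_sec (g : V -> R) : horofunction C (Hilb C) b g <->
    exists x : V, exists f : V -> R,
      [/\ bdry C x, x != 0, A_C C b x f &
          forall y, C y -> g y = r_fun C b x y + f y].
Proof. by split; [exact: forward|exact: backward]. Qed.
End Cone.

Theorem mainTheorem7 (R : realType) (n : nat) (C : set 'rV[R]_n) (b : 'rV[R]_n) :
  open_cone C -> no_lines C -> C b ->
  forall g : 'rV[R]_n -> R,
    horofunction C (Hilb C) b g <->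
    exists x : 'rV[R]_n, exists f : 'rV[R]_n -> R,
      [/\ bdry C x, x != 0, A_C C b x f &
          forall y, C y -> g y = r_fun C b x y + f y].
Proof.
move=> oC nlC Cb g.
exact: (main_sec oC nlC Cb g).
Qed.
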